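(* The Jouanolou foliation $\mathcal{J}_2$ satisfies property $\mathcal{P}_S$: the vector field $J_2$ does not vanish on $\mathbf{C}^3\setminus\{0\}$, every singular point of $\mathcal{J}_2$ is hyperbolic, and every singular point of $\mathcal{J}_2$ is a source of the real field $W$.
   Context: $\mathcal{J}_2$ is the foliation of $\mathbf{P}^2_{\mathbf{C}}$ induced by the divergence-free homogeneous vector field $J_2=y^2\partial_x+z^2\partial_y+x^2\partial_z$ on $\mathbf{C}^3$. With $\Pi:\mathbf{C}^3\setminus\{0\}\to\mathbf{P}^2_{\mathbf{C}}$ and $p\cdot p'=x\bar x'+y\bar y'+z\bar z'$, the real field $W$ is the projection to $\mathbf{P}^2_{\mathbf{C}}$ of the real vector field $\mathrm{Re}(\tilde\rho J_2)$, $\tilde\rho(p)=-2(p\cdot J_2(p))/\|p\|^{4}$. A singular point is hyperbolic if the two eigenvalues of a local holomorphic vector field defining the foliation there are not $\mathbf{R}$-collinear; it is a source of $W$ if all eigenvalues of the linearization of $W$ there have positive real part. *)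

(* Defs.v *)
From HB Require Import structures.
From mathcomp Require Import all_boot all_order all_algebra.
From mathcomp Require Import all_classical all_reals all_analysis.
From mathcomp Require Export complex.
Import Order.TTheory GRing.Theory Num.Theory.
Import numFieldNormedType.Exports.

Set Implicit Arguments.
Unset Strict Implicit.
Unset Printing Implicit Defensive.

Local Open Scope ring_scope.
Local Open Scope complex_scope.

Section Jouanolou.
Variable R : realType.
Local Notation C := R[i].

Definition ix : 'I_3 := ord0.
Definition iy : 'I_3 := inord 1.
Definition iz : 'I_3 := inord 2.

Definition J2 (p : {ffun 'I_3 -> C}) : {ffun 'I_3 -> C} :=
  [ffun i => if i == ix then p iy ^+ 2
             else if i == iy then p iz ^+ 2 else p ix ^+ 2].

Definition hdot (p q : {ffun 'I_3 -> C}) : C := \sum_i p i * (q i)^*.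

Definition rho (p : {ffun 'I_3 -> C}) : C :=
  - 2%:R * hdot p (J2 p) / (hdot p p) ^+ 2.

(* Affine chart k of P^2 = {p_k <> 0}:  inverse chart w |-> [p] with p_k = 1
   and p_(lift k j) = w_j ; chart map  p |-> (p_(lift k j) / p_k)_j. *)
Definition chart_inv (k : 'I_3) (w : {ffun 'I_2 -> C}) : {ffun 'I_3 -> C} :=
  [ffun i => if unlift k i is Some j then w j else 1].

(* Differential at p (with p_k <> 0) of the chart map p |-> (p_(lift k j)/p_k)_j
   of Pi, applied to a tangent vector V of C^3. *)
Definition dchart (k : 'I_3) (p V : {ffun 'I_3 -> C}) : {ffun 'I_2 -> C} :=
  [ffun j => (V (lift k j) * p k - p (lift k j) * V k) / (p k) ^+ 2].

Definition Xchart (k : 'I_3) (w : {ffun 'I_2 -> C}) : {ffun 'I_2 -> C} :=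
  dchart k (chart_inv k w) (J2 (chart_inv k w)).

(* The real vector field W in chart k: projection of Re(rho~ J_2),
   a real vector field on C^2 = R^4. *)
Definition Wchart (k : 'I_3) (w : {ffun 'I_2 -> C}) : {ffun 'I_2 -> C} :=
  dchart k (chart_inv k w) (rho (chart_inv k w) *: J2 (chart_inv k w)).

Definition e2 (l : 'I_2) : {ffun 'I_2 -> C} := [ffun j => (j == l)%:R].

Definition holJac (k : 'I_3) (w : {ffun 'I_2 -> C}) : 'M[C]_2 :=
  \matrix_(j, l) derive (fun t : C^o => (Xchart k (w + t *: e2 l) j : C^o)) 0 1.

(* Real coordinates on C^2 = R^4: (Re w_0, Im w_0, Re w_1, Im w_1). *)
Definition rcoord (a : 'I_4) (v : {ffun 'I_2 -> C}) : R :=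
  let z := v (inord a./2) in if odd a then complex.Im z else complex.Re z.
Definition rdir (b : 'I_4) : {ffun 'I_2 -> C} :=
  (if odd b then 'i else 1) *: e2 (inord b./2).

Definition realJacW (k : 'I_3) (w : {ffun 'I_2 -> C}) : 'M[R]_4 :=
  \matrix_(a, b) derive (fun t : R => rcoord a (Wchart k (w + t%:C *: rdir b))) 0 1.

Definition Rcollinear (m1 m2 : C) : Prop :=
  exists a b : R, (a != 0 \/ b != 0) /\ a%:C * m1 + b%:C * m2 = 0.

Definition hyperbolic (A : 'M[C]_2) : Prop :=
  forall m1 m2 : C, char_poly A = ('X - m1%:P) * ('X - m2%:P) ->
    ~ Rcollinear m1 m2.

Definition source (M : 'M[R]_4) : Prop :=
  forall m : C, eigenvalue (map_mx (real_complex R) M) m -> 0 < complex.Re m.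

End Jouanolou.

(* Main.v *)
Require Import Defs.
From HB Require Import structures.
From mathcomp Require Import all_boot all_order all_algebra.
From mathcomp Require Import all_classical all_reals all_analysis.
From mathcomp Require Import complex.
From mathcomp Require Import ring lra.
Import Order.TTheory GRing.Theory Num.Theory.
Import numFieldNormedType.Exports.
Local Open Scope ring_scope.
Local Open Scope complex_scope.

Section Calc.
Context {R : realType}.
Local Notation C := R[i].
Local Notation cRe := complex.Re.
Local Notation cIm := complex.Im.

Lemma ReM (x y : C) : cRe (x * y) = cRe x * cRe y - cIm x * cIm y.
Proof. by case: x => a b; case: y => c d. Qed.
Lemma ImM (x y : C) : cIm (x * y) = cRe x * cIm y + cIm x * cRe y.
Proof. by case: x => a b; case: y => c d /=; rewrite addrC. Qed.
Lemma ReD (x y : C) : cRe (x + y) = cRe x + cRe y.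
Proof. by case: x => a b; case: y => c d. Qed.
Lemma ImD (x y : C) : cIm (x + y) = cIm x + cIm y.
Proof. by case: x => a b; case: y => c d. Qed.
Lemma ReN (x : C) : cRe (- x) = - cRe x.
Proof. by case: x => a b. Qed.
Lemma ImN (x : C) : cIm (- x) = - cIm x.
Proof. by case: x => a b. Qed.
Lemma ReJ (x : C) : cRe (x^*) = cRe x.
Proof. by case: x => a b. Qed.
Lemma ImJ (x : C) : cIm (x^*) = - cIm x.
Proof. by case: x => a b. Qed.
Lemma ReV (x : C) : cRe (x^-1) = cRe x / (cRe x ^+ 2 + cIm x ^+ 2).
Proof. by case: x => a b. Qed.
Lemma ImV (x : C) : cIm (x^-1) = - (cIm x / (cRe x ^+ 2 + cIm x ^+ 2)).
Proof. by case: x => a b. Qed.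
Lemma ReR (r : R) : cRe (r%:C) = r. Proof. by []. Qed.
Lemma ImR (r : R) : cIm (r%:C) = 0. Proof. by []. Qed.

Definition CD (f : R -> C) (d : C) :=
  is_derive (0:R) (1:R) (fun t => cRe (f t)) (cRe d) /\
  is_derive (0:R) (1:R) (fun t => cIm (f t)) (cIm d).
Definition CDx (f : R -> C) :=
  derivable (fun t => cRe (f t)) (0:R) (1:R) /\
  derivable (fun t => cIm (f t)) (0:R) (1:R).

Lemma dvM (f g : R -> R) : derivable f 0 1 -> derivable g 0 1 ->
  derivable (fun t => f t * g t) (0:R) (1:R).
Proof. exact: derivableM. Qed.
Lemma dvD (f g : R -> R) : derivable f 0 1 -> derivable g 0 1 ->
  derivable (fun t => f t + g t) (0:R) (1:R).
Proof. exact: derivableD. Qed.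
Lemma dvN (f : R -> R) : derivable f 0 1 ->
  derivable (fun t => - f t) (0:R) (1:R).
Proof. exact: derivableN. Qed.
Lemma dvV (f : R -> R) : f 0 != 0 -> derivable f 0 1 ->
  derivable (fun t => (f t)^-1) (0:R) (1:R).
Proof. exact: derivableV. Qed.
Lemma dvC (c : R) : derivable (fun _ : R => c) (0:R) (1:R).
Proof. exact: derivable_cst. Qed.
Lemma dvid : derivable (fun t : R => t) (0:R) (1:R).
Proof. exact: derivable_id. Qed.

Lemma idM (f g : R -> R) df dg : is_derive (0:R) (1:R) f df -> is_derive (0:R) 1 g dg ->
  is_derive (0:R) (1:R) (fun t => f t * g t) (f 0 * dg + g 0 * df).
Proof. move=> ? ?; exact: is_deriveM. Qed.
Lemma idD (f g : R -> R) df dg : is_derive (0:R) (1:R) f df -> is_derive (0:R) 1 g dg ->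
  is_derive (0:R) (1:R) (fun t => f t + g t) (df + dg).
Proof. move=> ? ?; exact: is_deriveD. Qed.
Lemma idN (f : R -> R) df : is_derive (0:R) (1:R) f df ->
  is_derive (0:R) (1:R) (fun t => - f t) (- df).
Proof. move=> ?; exact: is_deriveN. Qed.
Lemma idC (c : R) : is_derive (0:R) (1:R) (fun _ => c) 0.
Proof. exact: is_derive_cst. Qed.
Lemma idid : is_derive (0:R) (1:R) (fun t => t) 1.
Proof. exact: is_derive_id. Qed.


Arguments idM {f g df dg}. Arguments idD {f g df dg}. Arguments idN {f df}.
Arguments dvM {f g}. Arguments dvD {f g}. Arguments dvN {f}. Arguments dvV {f}.

Lemma CD_lin (a b : C) : CD (fun t => a + t%:C * b) b.
Proof.
split.
- have -> : (fun t => cRe (a + t%:C * b)) = (fun t => cRe a + t * cRe b).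
    by apply/funext => t; rewrite ReD ReM /= mul0r subr0.
  apply: (is_derive_eq (idD (idC _) (idM idid (idC _)))).
  by rewrite /= mul0r add0r mulr1 add0r.
- have -> : (fun t => cIm (a + t%:C * b)) = (fun t => cIm a + t * cIm b).
    by apply/funext => t; rewrite ImD ImM /= mul0r addr0.
  apply: (is_derive_eq (idD (idC _) (idM idid (idC _)))).
  by rewrite /= mul0r add0r mulr1 add0r.
Qed.

Lemma CD_add {f g : R -> C} {a b : C} : CD f a -> CD g b -> CD (fun t => f t + g t) (a + b).
Proof.
move=> [fr fi] [gr gi]; split.
- have -> : (fun t => cRe (f t + g t)) = (fun t => cRe (f t) + cRe (g t)).
    by apply/funext => t; rewrite ReD.
  by apply: (is_derive_eq (idD fr gr)); rewrite ReD.
- have -> : (fun t => cIm (f t + g t)) = (fun t => cIm (f t) + cIm (g t)).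
    by apply/funext => t; rewrite ImD.
  by apply: (is_derive_eq (idD fi gi)); rewrite ImD.
Qed.

Lemma CD_opp {f : R -> C} {a : C} : CD f a -> CD (fun t => - f t) (- a).
Proof.
move=> [fr fi]; split.
- have -> : (fun t => cRe (- f t)) = (fun t => - cRe (f t)).
    by apply/funext => t; rewrite ReN.
  by apply: (is_derive_eq (idN fr)); rewrite ReN.
- have -> : (fun t => cIm (- f t)) = (fun t => - cIm (f t)).
    by apply/funext => t; rewrite ImN.
  by apply: (is_derive_eq (idN fi)); rewrite ImN.
Qed.

Lemma CD_mul {f g : R -> C} {a b : C} : CD f a -> CD g b ->
  CD (fun t => f t * g t) (a * g 0 + f 0 * b).
Proof.
move=> [fr fi] [gr gi]; split.
- have -> : (fun t => cRe (f t * g t)) =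
     (fun t => cRe (f t) * cRe (g t) + - (cIm (f t) * cIm (g t))).
    by apply/funext => t; rewrite ReM.
  apply: (is_derive_eq (idD (idM fr gr) (idN (idM fi gi)))).
  rewrite ReD !ReM; ring.
- have -> : (fun t => cIm (f t * g t)) =
     (fun t => cRe (f t) * cIm (g t) + cIm (f t) * cRe (g t)).
    by apply/funext => t; rewrite ImM.
  apply: (is_derive_eq (idD (idM fr gi) (idM fi gr))).
  rewrite ImD !ImM; ring.
Qed.

Lemma CD_cst c : CD (fun _ => c) 0.
Proof. by split; exact: idC. Qed.

Lemma CDx_of {f : R -> C} {d : C} : CD f d -> CDx f.
Proof. by move=> [[? _] [? _]]. Qed.

Lemma CDx_add {f g : R -> C} : CDx f -> CDx g -> CDx (fun t => f t + g t).
Proof.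
move=> [fr fi] [gr gi]; split.
- have -> : (fun t => cRe (f t + g t)) = (fun t => cRe (f t) + cRe (g t)).
    by apply/funext => t; rewrite ReD.
  exact: (dvD fr gr).
- have -> : (fun t => cIm (f t + g t)) = (fun t => cIm (f t) + cIm (g t)).
    by apply/funext => t; rewrite ImD.
  exact: (dvD fi gi).
Qed.

Lemma CDx_opp {f : R -> C} : CDx f -> CDx (fun t => - f t).
Proof.
move=> [fr fi]; split.
- have -> : (fun t => cRe (- f t)) = (fun t => - cRe (f t)).
    by apply/funext => t; rewrite ReN.
  exact: (dvN fr).
- have -> : (fun t => cIm (- f t)) = (fun t => - cIm (f t)).
    by apply/funext => t; rewrite ImN.
  exact: (dvN fi).
Qed.

Lemma CDx_mul {f g : R -> C} : CDx f -> CDx g -> CDx (fun t => f t * g t).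
Proof.
move=> [fr fi] [gr gi]; split.
- have -> : (fun t => cRe (f t * g t)) =
     (fun t => cRe (f t) * cRe (g t) + - (cIm (f t) * cIm (g t))).
    by apply/funext => t; rewrite ReM.
  exact: (dvD (dvM fr gr) (dvN (dvM fi gi))).
- have -> : (fun t => cIm (f t * g t)) =
     (fun t => cRe (f t) * cIm (g t) + cIm (f t) * cRe (g t)).
    by apply/funext => t; rewrite ImM.
  exact: (dvD (dvM fr gi) (dvM fi gr)).
Qed.

Lemma CDx_conj {f : R -> C} : CDx f -> CDx (fun t => (f t)^*).
Proof.
move=> [fr fi]; split.
- have -> : (fun t => cRe ((f t)^*)) = (fun t => cRe (f t)).
    by apply/funext => t; rewrite ReJ.
  exact: fr.
- have -> : (fun t => cIm ((f t)^*)) = (fun t => - cIm (f t)).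
    by apply/funext => t; rewrite ImJ.
  exact: (dvN fi).
Qed.

Lemma CDx_inv {f : R -> C} : f 0 != 0 -> CDx f -> CDx (fun t => (f t)^-1).
Proof.
move=> f0 [fr fi].
have n0 : cRe (f 0) * cRe (f 0) + cIm (f 0) * cIm (f 0) != 0.
  apply: contra f0; case: (f 0) => a b /= /eqP h.
  have ha : a = 0 by nra.
  have hb : b = 0 by nra.
  by rewrite ha hb.
have dn := dvV n0 (dvD (dvM fr fr) (dvM fi fi)).
split.
- have -> : (fun t => cRe ((f t)^-1)) =
     (fun t => cRe (f t) * (cRe (f t) * cRe (f t) + cIm (f t) * cIm (f t))^-1).
    by apply/funext => t; rewrite ReV !expr2.
  exact: (dvM fr dn).
- have -> : (fun t => cIm ((f t)^-1)) =
     (fun t => - (cIm (f t) * (cRe (f t) * cRe (f t) + cIm (f t) * cIm (f t))^-1)).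
    by apply/funext => t; rewrite ImV !expr2.
  exact: (dvN (dvM fi dn)).
Qed.

Lemma CDx_cst c : CDx (fun _ => c).
Proof. exact: CDx_of (CD_cst c). Qed.

Lemma CD_mul0 {g h : R -> C} {d : C} : CDx g -> CD h d -> h 0 = 0 ->
  CD (fun t => g t * h t) (g 0 * d).
Proof.
move=> [gr gi] hd h0.
have G : CD g ((derive (fun t => cRe (g t)) 0 1)%:C
                   + 'i * (derive (fun t => cIm (g t)) 0 1)%:C).
  split; (apply: is_derive_eq; first exact: derivableP).
    by rewrite ReD ReM /=; ring.
  by rewrite ImD ImM /=; ring.
have := CD_mul G hd; rewrite h0 mulr0 add0r.
by [].
Qed.

Lemma CD_val f d : CD f d ->
  derive (fun t => cRe (f t)) (0:R) (1:R) = cRe d /\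
  derive (fun t => cIm (f t)) (0:R) (1:R) = cIm d.
Proof. by move=> [h1 h2]; split; apply: derive_val. Qed.

End Calc.
Section Alg.
Context {R : realType}.
Local Notation C := R[i].
Local Notation cRe := complex.Re.
Local Notation cIm := complex.Im.

Lemma quad_re (r s : R) (m : C) : r ^+ 2 < 4%:R * s ->
  m ^+ 2 - r%:C * m + s%:C = 0 -> cRe m = r / 2%:R.
Proof.
case: m => x y hd H.
have H1 := congr1 (@complex.Re R) H.
have H2 := congr1 (@complex.Im R) H.
move: H1 H2; rewrite /GRing.exp /= => H1 H2 /=.
have [y0|hy] := eqVneq y 0.
  rewrite y0 in H1; exfalso; have := sqr_ge0 (2%:R * x - r); nra.
have : y * (2%:R * x - r) = 0 by rewrite -H2; ring.
move/eqP; rewrite mulf_eq0 (negbTE hy) /= => /eqP h.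
have -> : x = r / 2%:R + (2%:R * x - r) / 2%:R by field.
by rewrite h mul0r addr0.
Qed.

Lemma hyp_poly (A : 'M[C]_2) (m1 m2 : C) :
  char_poly A = ('X - m1%:P) * ('X - m2%:P) ->
  m1 + m2 = \tr A /\ m1 * m2 = \det A.
Proof.
move=> Hc; split.
- have := char_poly_trace A; rewrite Hc /= => h.
  apply: oppr_inj; rewrite -h //.
  rewrite !(mulrBl, mulrBr) !coefE /=; ring.
- have := char_poly_det A; rewrite Hc /= sqrrN expr1n mul1r => <-.
  rewrite !(mulrBl, mulrBr) !coefE /=; ring.
Qed.

Lemma I2_cases (i : 'I_2) : i = ord0 \/ i = ord_max.
Proof.
case: i => [[|[|//]] Hi]; [left|right]; exact: val_inj.
Qed.

Lemma tr2 (A : 'M[C]_2) : \tr A = A ord0 ord0 + A ord_max ord_max.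
Proof.
rewrite /mxtrace big_ord_recr big_ord1 /=; congr (A _ _ + _); exact: val_inj.
Qed.

Lemma det2 (A : 'M[C]_2) :
  \det A = A ord0 ord0 * A ord_max ord_max - A ord0 ord_max * A ord_max ord0.
Proof.
rewrite (expand_det_row _ ord0) big_ord_recr big_ord1 /= /cofactor.
rewrite !det_mx11 !mxE /=.
have E1 : widen_ord (leqnSn 1) ord0 = ord0 :> 'I_2 by apply: val_inj.
have E2 : lift ord0 ord0 = ord_max :> 'I_2 by apply: val_inj.
have E3 : lift ord_max ord0 = ord0 :> 'I_2 by apply: val_inj.
rewrite E1 E2 E3 expr0 expr1; ring.
Qed.

Lemma hyp_of (A : 'M[C]_2) (l : C) : l != 0 ->
  \tr A = - 4%:R * l -> \det A = 7%:R * l ^+ 2 -> hyperbolic A.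
Proof.
move=> l0 htr hdet m1 m2 Hc [a [b [ab0 Hab]]].
have [e1 e2] := @hyp_poly A m1 m2 Hc.
have key : (a%:C * m1 + b%:C * m2) * (b%:C * m1 + a%:C * m2) =
  (a * b)%:C * (m1 + m2) ^+ 2 + ((a - b) ^+ 2)%:C * (m1 * m2) by ring.
rewrite Hab mul0r e1 e2 htr hdet in key.
have : (16%:R * (a * b) + 7%:R * (a - b) ^+ 2)%:C * l ^+ 2 = 0.
  by rewrite key; rewrite !rmorphD !rmorphM /= !rmorph_nat; ring.
move/eqP; rewrite mulf_eq0 expf_eq0 (negbTE l0) andbF orbF => /eqP h.
have h' : 16%:R * (a * b) + 7%:R * (a - b) ^+ 2 = 0 by case: h.
have hab2 := sqr_ge0 (a + b).
by case: ab0 => /negP; apply; rewrite -sqrf_eq0 eq_le sqr_ge0 andbT; nra.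
Qed.

Lemma source_of (M : 'M[R]_4) (r s : R) : r ^+ 2 < 4%:R * s -> 0 < r ->
  M *m M = r *: M - s *: 1%:M -> source M.
Proof.
move=> hd hr HM m /eigenvalueP [v Hv vn0].
set N := map_mx (real_complex R) M.
have HN : N *m N = r%:C *: N - s%:C *: 1%:M.
  by rewrite -map_mxM HM map_mxD map_mxN !map_mxZ map_mx1.
have : (m ^+ 2 - r%:C * m + s%:C) *: v = 0.
  have E1 : v *m (N *m N) = (m ^+ 2) *: v.
    by rewrite mulmxA Hv -scalemxAl Hv scalerA expr2.
  have E2 : v *m (N *m N) = (r%:C * m - s%:C) *: v.
    by rewrite HN mulmxBr -!scalemxAr Hv mulmx1 scalerA scalerBl.
  by rewrite !scalerDl scaleNr -E1 E2 scalerBl addrAC subrK subrr.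
move/eqP; rewrite scaler_eq0 (negbTE vn0) orbF => /eqP h.
by rewrite (@quad_re r s m hd h) divr_gt0.
Qed.

Definition cb (b : bool) : C := if b then 'i else 1.
Definition proj (b : bool) (z : C) : R := if b then cIm z else cRe z.
Definition realify (B : 'M[C]_2) : 'M[R]_4 :=
  \matrix_(a, b) proj (odd a) (B (inord a./2) (inord b./2) * cb (odd b)).

Lemma inord0_2 : inord 0 = ord0 :> 'I_2.
Proof. by apply: val_inj; rewrite /= inordK. Qed.
Lemma inord1_2 : inord 1 = ord_max :> 'I_2.
Proof. by apply: val_inj; rewrite /= inordK. Qed.

Lemma realify_mul B1 B2 : realify (B1 *m B2) = realify B1 *m realify B2.
Proof.
apply/matrixP => a b; rewrite !mxE.
rewrite !big_ord_recr !big_ord0 /= !add0r !mxE /= !inord0_2 !inord1_2.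
have E1 : widen_ord (leqnSn 1) ord_max = ord0 :> 'I_2 by apply: val_inj.
rewrite E1.
move: (B1 (inord a./2) ord0) (B1 (inord a./2) ord_max)
      (B2 ord0 (inord b./2)) (B2 ord_max (inord b./2)) => x0 x1 y0 y1.
rewrite /proj /cb.
case: (odd a); case: (odd b); case: x0 => ? ?; case: x1 => ? ?;
  case: y0 => ? ?; case: y1 => ? ? /=; ring.
Qed.

Lemma realify_lin (r s : R) B1 B2 :
  realify (r%:C *: B1 + s%:C *: B2) = r *: realify B1 + s *: realify B2.
Proof.
apply/matrixP => a b; rewrite !mxE.
rewrite /proj /cb; move: (B1 _ _) (B2 _ _) => x y.
case: (odd a); case: (odd b); case: x => ? ?; case: y => ? ? /=; ring.
Qed.

Lemma realify1 : realify 1%:M = 1%:M.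
Proof.
apply/matrixP => a b; rewrite !mxE.
case: a => [[|[|[|[|//]]]] Ha]; case: b => [[|[|[|[|//]]]] Hb];
  rewrite /= ?inord0_2 ?inord1_2 /proj /cb /=; ring.
Qed.


Lemma cayley2 (B : 'M[C]_2) : B *m B = \tr B *: B - \det B *: 1%:M.
Proof.
rewrite tr2 det2; apply/matrixP => i j; rewrite !mxE.
rewrite big_ord_recr big_ord1 /= ?mxE.
have E1 : widen_ord (leqnSn 1) ord0 = ord0 :> 'I_2 by apply: val_inj.
rewrite E1.
by case: (I2_cases i) => ->; case: (I2_cases j) => -> /=; ring.
Qed.

End Alg.
Section Chart.
Context {R : realType}.
Local Notation C := R[i].
Local Notation cRe := complex.Re.
Local Notation cIm := complex.Im.

Lemma cubic_hol (a1 b1 a2 b2 a3 b3 : C) :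
  is_derive (0 : C^o) (1 : C^o)
    (fun t : C^o => ((a1 + t * b1) ^+ 2 - (a2 + t * b2) * (a3 + t * b3) ^+ 2 : C^o))
    (2%:R * a1 * b1 - (b2 * a3 ^+ 2 + 2%:R * a2 * a3 * b3)).
Proof.
apply: is_derive_eq.
rewrite /GRing.scale /= !mul0r !addr0 !add0r.
ring.
Qed.

Lemma CD_eq (f : R -> C) d d' : CD f d -> d = d' -> CD f d'.
Proof. by move=> h <-. Qed.

Lemma CD_sq (a b : C) : CD (fun t => (a + t%:C * b) ^+ 2) (2%:R * a * b).
Proof.
apply: CD_eq; first exact: (CD_mul (CD_lin a b) (CD_lin a b)).
rewrite /= rmorph0 mul0r addr0; ring.
Qed.

Lemma cubic_real (a1 b1 a2 b2 a3 b3 : C) :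
  CD (fun t : R => (a1 + t%:C * b1) ^+ 2 - (a2 + t%:C * b2) * (a3 + t%:C * b3) ^+ 2)
    (2%:R * a1 * b1 - (b2 * a3 ^+ 2 + 2%:R * a2 * a3 * b3)).
Proof.
apply: CD_eq; first exact: (CD_add (CD_sq a1 b1)
   (CD_opp (CD_mul (CD_lin a2 b2) (CD_sq a3 b3)))).
rewrite /= rmorph0 mul0r !addr0; ring.
Qed.

Definition sidx (i : 'I_3) : 'I_3 :=
  if i == ix then iy else if i == iy then iz else ix.

Lemma J2E (p : {ffun 'I_3 -> C}) i : J2 p i = p (sidx i) ^+ 2.
Proof. by rewrite ffunE /sidx; case: (i == ix); case: (i == iy). Qed.

Definition dP (k : 'I_3) (v : {ffun 'I_2 -> C}) (i : 'I_3) : C :=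
  if unlift k i is Some j then v j else 0.

Lemma chart_invD k (w v : {ffun 'I_2 -> C}) (t : C) i :
  chart_inv k (w + t *: v) i = chart_inv k w i + t * dP k v i.
Proof.
rewrite !ffunE /dP; case: (unlift k i) => [j|]; last by rewrite mulr0 addr0.
by rewrite !ffunE.
Qed.

Lemma chart_inv_k k (w : {ffun 'I_2 -> C}) : chart_inv k w k = 1.
Proof. by rewrite ffunE unlift_none. Qed.

Lemma chart_inv_lift k (w : {ffun 'I_2 -> C}) j : chart_inv k w (lift k j) = w j.
Proof. by rewrite ffunE liftK. Qed.

Lemma dP_k k (v : {ffun 'I_2 -> C}) : dP k v k = 0.
Proof. by rewrite /dP unlift_none. Qed.

Lemma dP_lift k (v : {ffun 'I_2 -> C}) j : dP k v (lift k j) = v j.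
Proof. by rewrite /dP liftK. Qed.

Lemma dPZ k (c : C) (v : {ffun 'I_2 -> C}) i : dP k (c *: v) i = c * dP k v i.
Proof. by rewrite /dP; case: (unlift k i) => [j|]; rewrite ?ffunE ?mulr0. Qed.

Lemma XchartE k (w : {ffun 'I_2 -> C}) j : Xchart k w j =
  J2 (chart_inv k w) (lift k j) - chart_inv k w (lift k j) * J2 (chart_inv k w) k.
Proof. by rewrite /Xchart /dchart ffunE chart_inv_k expr1n divr1 mulr1. Qed.

Lemma WchartE k (w : {ffun 'I_2 -> C}) j : Wchart k w j = rho (chart_inv k w) * Xchart k w j.
Proof.
rewrite /Wchart /Xchart /dchart.
have hk := chart_inv_k k w.
move: (chart_inv k w) hk => p hk; move: (J2 p) => J.
rewrite !ffunE hk expr1n !divr1 !mulr1 /GRing.scale /=; ring.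
Qed.

Definition DX k (w : {ffun 'I_2 -> C}) (v : {ffun 'I_2 -> C}) (j : 'I_2) : C :=
  let p := chart_inv k w in let m := lift k j in
  2%:R * p (sidx m) * dP k v (sidx m) -
  (dP k v m * p (sidx k) ^+ 2 + 2%:R * p m * p (sidx k) * dP k v (sidx k)).

Lemma DXZ k (w : {ffun 'I_2 -> C}) c v j : DX k w (c *: v) j = c * DX k w v j.
Proof. rewrite /DX !dPZ; ring. Qed.

Lemma holJacE k (w : {ffun 'I_2 -> C}) : holJac k w = \matrix_(j, l) DX k w (e2 R l) j.
Proof.
apply/matrixP => j l; rewrite !mxE.
set a1 := chart_inv k w (sidx (lift k j)).
set b1 := dP k (e2 R l) (sidx (lift k j)).
set a2 := chart_inv k w (lift k j).
set b2 := dP k (e2 R l) (lift k j).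
set a3 := chart_inv k w (sidx k).
set b3 := dP k (e2 R l) (sidx k).
have -> : (fun t : C^o => (Xchart k (w + t *: e2 R l) j : C^o)) =
  (fun t : C^o => ((a1 + t * b1) ^+ 2 - (a2 + t * b2) * (a3 + t * b3) ^+ 2 : C^o)).
  by apply/funext => t; rewrite XchartE !J2E !chart_invD.
have H := cubic_hol a1 b1 a2 b2 a3 b3.
by rewrite derive_val.
Qed.


Lemma CDx_sum n (F : 'I_n -> R -> C) :
  (forall i, CDx (F i)) -> CDx (fun t => \sum_(i < n) F i t).
Proof.
elim: n F => [|n IH] F HF.
  have -> : (fun t => \sum_(i < 0) F i t) = (fun _ => 0 : C).
    by apply/funext => t; rewrite big_ord0.
  exact: CDx_cst.
have -> : (fun t => \sum_(i < n.+1) F i t) =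
  (fun t => \sum_(i < n) F (widen_ord (leqnSn n) i) t + F ord_max t).
  by apply/funext => t; rewrite big_ord_recr.
exact: (CDx_add (IH (fun i => F (widen_ord (leqnSn n) i)) (fun i => HF _)) (HF _)).
Qed.

Lemma sum3 (F : 'I_3 -> C) : \sum_(i < 3) F i = F ix + F iy + F iz.
Proof.
rewrite !big_ord_recr big_ord0 /= add0r.
by congr (F _ + F _ + F _); apply: val_inj; rewrite /= ?inordK.
Qed.

Lemma scale0C (w v : {ffun 'I_2 -> C}) : w + (0:R)%:C *: v = w.
Proof. by rewrite rmorph0 scale0r addr0. Qed.

Lemma hdot_pos k (w : {ffun 'I_2 -> C}) :
  0 < hdot (chart_inv k w) (chart_inv k w).
Proof.
rewrite /hdot (bigD1 k) //= chart_inv_k rmorph1 mulr1.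
apply: ltr_wpDr; last exact: ltr01.
apply: sumr_ge0 => i _; exact: mulcJ_ge0.
Qed.

Lemma CDx_rho k (w v : {ffun 'I_2 -> C}) :
  CDx (fun t => rho (chart_inv k (w + t%:C *: v))).
Proof.
pose pt t := chart_inv k (w + t%:C *: v).
have Hpt : forall i, CDx (fun t => pt t i).
  move=> i; have -> : (fun t => pt t i) =
     (fun t => chart_inv k w i + t%:C * dP k v i).
    by apply/funext => t; rewrite /pt chart_invD.
  exact: (CDx_of (CD_lin _ _)).
have HJ : forall i, CDx (fun t => J2 (pt t) i).
  move=> i; have -> : (fun t => J2 (pt t) i) =
     (fun t => pt t (sidx i) * pt t (sidx i)).
    by apply/funext => t; rewrite J2E expr2.
  exact: (CDx_mul (Hpt _) (Hpt _)).
pose N t := \sum_(i < 3) pt t i * (J2 (pt t) i)^*.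
pose D t := \sum_(i < 3) pt t i * (pt t i)^*.
have HN : CDx N.
  have -> : N = (fun t => pt t ix * (J2 (pt t) ix)^* + pt t iy * (J2 (pt t) iy)^*
                          + pt t iz * (J2 (pt t) iz)^*).
    by apply/funext => t; rewrite /N sum3.
  have H3 := fun i => CDx_mul (Hpt i) (CDx_conj (HJ i)).
  exact: (CDx_add (CDx_add (H3 ix) (H3 iy)) (H3 iz)).
have HD : CDx D.
  have -> : D = (fun t => pt t ix * (pt t ix)^* + pt t iy * (pt t iy)^*
                          + pt t iz * (pt t iz)^*).
    by apply/funext => t; rewrite /D sum3.
  have H3 := fun i => CDx_mul (Hpt i) (CDx_conj (Hpt i)).
  exact: (CDx_add (CDx_add (H3 ix) (H3 iy)) (H3 iz)).
have D0 : D 0 * D 0 != 0.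
  rewrite /D /pt scale0C mulf_eq0 orbb.
  by have := hdot_pos k w; rewrite lt0r => /andP [].
have -> : (fun t => rho (chart_inv k (w + t%:C *: v))) =
   (fun t => (- 2%:R * N t) * (D t * D t)^-1).
  by apply/funext => t; rewrite /rho /hdot expr2.
exact: (CDx_mul (CDx_mul (CDx_cst _) HN) (CDx_inv D0 (CDx_mul HD HD))).
Qed.

Lemma CD_X k (w v : {ffun 'I_2 -> C}) j :
  CD (fun t => Xchart k (w + t%:C *: v) j) (DX k w v j).
Proof.
have -> : (fun t => Xchart k (w + t%:C *: v) j) =
  (fun t => (chart_inv k w (sidx (lift k j)) + t%:C * dP k v (sidx (lift k j))) ^+ 2
     - (chart_inv k w (lift k j) + t%:C * dP k v (lift k j)) *
       (chart_inv k w (sidx k) + t%:C * dP k v (sidx k)) ^+ 2).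
  by apply/funext => t; rewrite XchartE !J2E !chart_invD.
exact: cubic_real.
Qed.

Lemma realJacWE k (w : {ffun 'I_2 -> C}) : Xchart k w = 0 ->
  realJacW k w = realify (rho (chart_inv k w) *: holJac k w).
Proof.
move=> X0; apply/matrixP => a b.
rewrite holJacE /realify !mxE.
set j := (inord a./2 : 'I_2).
have HW : CD (fun t => Wchart k (w + t%:C *: rdir R b) j)
             (rho (chart_inv k w) * DX k w (rdir R b) j).
  have -> : (fun t => Wchart k (w + t%:C *: rdir R b) j) =
    (fun t => rho (chart_inv k (w + t%:C *: rdir R b)) *
              Xchart k (w + t%:C *: rdir R b) j).
    by apply/funext => t; rewrite WchartE.
  apply: CD_eq.
    apply: (CD_mul0 (CDx_rho k w _) (CD_X k w _ j)).
    by rewrite scale0C X0 ffunE.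
  by rewrite /= scale0C.
have [H1 H2] := CD_val _ _ HW.
rewrite /proj /cb /rcoord /= -/j.
case: (odd a); [rewrite H2 | rewrite H1]; by rewrite /rdir DXZ (mulrC (if odd b then _ else _)) mulrA.
Qed.

End Chart.
Section Keys.
Context {R : realType}.
Local Notation C := R[i].
Local Notation cRe := complex.Re.
Local Notation cIm := complex.Im.

Lemma val_iy : val iy = 1%N. Proof. by rewrite /= inordK. Qed.
Lemma val_iz : val iz = 2%N. Proof. by rewrite /= inordK. Qed.
Lemma lift_x0 : lift ix ord0 = iy :> 'I_3. Proof. by apply: val_inj; rewrite val_iy. Qed.
Lemma lift_x1 : lift ix ord_max = iz :> 'I_3. Proof. by apply: val_inj; rewrite val_iz. Qed.
Lemma lift_y0 : lift iy ord0 = ix :> 'I_3.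
Proof. by apply: val_inj; rewrite /= /bump val_iy. Qed.
Lemma lift_y1 : lift iy ord_max = iz :> 'I_3.
Proof. by apply: val_inj; rewrite /= /bump val_iy val_iz. Qed.
Lemma lift_z0 : lift iz ord0 = ix :> 'I_3.
Proof. by apply: val_inj; rewrite /= /bump val_iz. Qed.
Lemma lift_z1 : lift iz ord_max = iy :> 'I_3.
Proof. by apply: val_inj; rewrite /= /bump val_iz val_iy. Qed.
Lemma iyx : (iy == ix) = false. Proof. by apply/eqP => /(congr1 val); rewrite val_iy. Qed.
Lemma izx : (iz == ix) = false. Proof. by apply/eqP => /(congr1 val); rewrite val_iz. Qed.
Lemma izy : (iz == iy) = false.
Proof. by apply/eqP => /(congr1 val); rewrite val_iz val_iy. Qed.
Lemma sidx_x : sidx ix = iy. Proof. by rewrite /sidx eqxx. Qed.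
Lemma sidx_y : sidx iy = iz. Proof. by rewrite /sidx iyx eqxx. Qed.
Lemma sidx_z : sidx iz = ix. Proof. by rewrite /sidx izx izy. Qed.

Lemma I3_cases (i : 'I_3) : [\/ i = ix, i = iy | i = iz].
Proof.
case: i => [[|[|[|//]]] Hi].
- by apply: Or31; apply: val_inj.
- by apply: Or32; apply: val_inj; rewrite val_iy.
- by apply: Or33; apply: val_inj; rewrite val_iz.
Qed.

Lemma e2E (l j : 'I_2) : e2 R l j = (j == l)%:R.
Proof. by rewrite ffunE. Qed.

Lemma unit_rel (u v : C) : v ^+ 2 = u ^+ 3 -> v * u ^+ 2 = 1 ->
  [/\ u != 0, v != 0, (u^*)%R = u^-1 & (v^*)%R = v^-1].
Proof.
move=> h1 h2.
have u0 : u != 0 by apply: contra_eq_neq h2 => ->; rewrite expr0n mulr0 eq_sym oner_eq0.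
have v0 : v != 0 by apply: contra_eq_neq h2 => ->; rewrite mul0r eq_sym oner_eq0.
have n1 : `|v| ^+ 2 = `|u| ^+ 3 by rewrite -!normrX h1.
have n2 : `|v| * `|u| ^+ 2 = 1 by rewrite -normrX -normrM h2 normr1.
have nu : `|u| = 1.
  apply/eqP; rewrite -(@pexpr_eq1 _ _ 7) //.
  apply/eqP; rewrite (_ : 7%N = (3 + 4)%N) // exprD -n1.
  by rewrite (_ : 4%N = (2 * 2)%N) // exprM -exprMn n2 expr1n.
have nv : `|v| = 1 by rewrite -n2 nu expr1n mulr1.
have cj (x : C) : `|x| = 1 -> x != 0 -> (x^*)%R = x^-1.
  move=> nx x0; have := normCK x; rewrite nx expr1n => h.
  by rewrite -[(x^*)%R]mul1r -(mulVf x0) -mulrA -h mulr1.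
by split => //; apply: cj.
Qed.


Lemma conjX2 (x : C) : ((x ^+ 2)^*)%R = ((x^*)%R) ^+ 2.
Proof. by rewrite rmorphXn. Qed.
Lemma conj1 : ((1 : C)^*)%R = 1.
Proof. by rewrite rmorph1. Qed.

Lemma three_neq0 : (3%:R : C) != 0. Proof. by rewrite pnatr_eq0. Qed.

Lemma rho_help (N D l : C) : D = 3%:R -> N * l = 3%:R ->
  - 2%:R * N / D ^+ 2 * l = - (2%:R / 3%:R).
Proof.
move=> -> HN.
have -> : - 2%:R * N / 3%:R ^+ 2 * l = - 2%:R * (N * l) / 9%:R :> C.
  by field.
by rewrite HN; field.
Qed.

Definition keyP k (w : {ffun 'I_2 -> C}) :=
  exists l : C, [/\ l != 0, \tr (holJac k w) = - 4%:R * l,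
    \det (holJac k w) = 7%:R * l ^+ 2 & rho (chart_inv k w) * l = - (2%:R / 3%:R)].

Lemma key_x (w : {ffun 'I_2 -> C}) : Xchart ix w = 0 -> keyP ix w.
Proof.
move=> X0.
have Px : chart_inv ix w ix = 1 := chart_inv_k _ _.
have Py : chart_inv ix w iy = w ord0 by rewrite -lift_x0 chart_inv_lift.
have Pz : chart_inv ix w iz = w ord_max by rewrite -lift_x1 chart_inv_lift.
have Dx (v : {ffun 'I_2 -> C}) : dP ix v ix = 0 := dP_k _ _.
have Dy (v : {ffun 'I_2 -> C}) : dP ix v iy = v ord0 by rewrite -lift_x0 dP_lift.
have Dz (v : {ffun 'I_2 -> C}) : dP ix v iz = v ord_max by rewrite -lift_x1 dP_lift.
move: Px Py Pz; set u := w ord0; set v := w ord_max => Px Py Pz.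
have e1 : v ^+ 2 = u ^+ 3.
  have := congr1 (fun f : {ffun 'I_2 -> C} => f ord0) X0.
  rewrite /= XchartE lift_x0 !J2E sidx_y sidx_x Pz Py ffunE => /eqP.
  by rewrite subr_eq0 => /eqP ->; ring.
have e2 : v * u ^+ 2 = 1.
  have := congr1 (fun f : {ffun 'I_2 -> C} => f ord_max) X0.
  rewrite /= XchartE lift_x1 !J2E sidx_z sidx_x Px Pz Py ffunE => /eqP.
  by rewrite subr_eq0 expr1n => /eqP <-.
have [u0 v0 cu cv] := unit_rel _ _ e1 e2.
exists (u ^+ 2); split.
- by rewrite expf_neq0.
- rewrite holJacE tr2 !mxE /DX lift_x0 lift_x1 sidx_x sidx_y sidx_z.
  rewrite Px Py Pz !Dx !Dy !Dz !e2E /=; ring.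
- rewrite holJacE det2 !mxE /DX lift_x0 lift_x1 sidx_x sidx_y sidx_z.
  rewrite Px Py Pz !Dx !Dy !Dz !e2E /=.
  apply/eqP; rewrite -subr_eq0; apply/eqP.
  transitivity (4%:R * u * (v ^+ 2 - u ^+ 3)); first ring.
  by rewrite e1 subrr mulr0.
- rewrite /rho /hdot !sum3 !J2E sidx_x sidx_y sidx_z Px Py Pz.
  apply: rho_help.
    by rewrite conj1 cu cv !mulfV //; ring.
  rewrite !conjX2 cu cv ?conj1 ?expr1n.
  transitivity (1 + u ^+ 3 / v ^+ 2 + v * u ^+ 2); first by field; rewrite ?u0 ?v0.
  by rewrite -e1 divff ?expf_neq0 // e2; ring.
Qed.


Lemma key_y (w : {ffun 'I_2 -> C}) : Xchart iy w = 0 -> keyP iy w.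
Proof.
move=> X0.
have Py : chart_inv iy w iy = 1 := chart_inv_k _ _.
have Px : chart_inv iy w ix = w ord0 by rewrite -lift_y0 chart_inv_lift.
have Pz : chart_inv iy w iz = w ord_max by rewrite -lift_y1 chart_inv_lift.
have Dy (v : {ffun 'I_2 -> C}) : dP iy v iy = 0 := dP_k _ _.
have Dx (v : {ffun 'I_2 -> C}) : dP iy v ix = v ord0 by rewrite -lift_y0 dP_lift.
have Dz (v : {ffun 'I_2 -> C}) : dP iy v iz = v ord_max by rewrite -lift_y1 dP_lift.
move: Px Py Pz; set u := w ord0; set v := w ord_max => Px Py Pz.
have e2 : u * v ^+ 2 = 1.
  have := congr1 (fun f : {ffun 'I_2 -> C} => f ord0) X0.
  rewrite /= XchartE lift_y0 !J2E sidx_x sidx_y Py Px Pz ffunE => /eqP.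
  by rewrite subr_eq0 expr1n => /eqP <-.
have e1 : u ^+ 2 = v ^+ 3.
  have := congr1 (fun f : {ffun 'I_2 -> C} => f ord_max) X0.
  rewrite /= XchartE lift_y1 !J2E sidx_z sidx_y Px Pz ffunE => /eqP.
  by rewrite subr_eq0 => /eqP ->; ring.
have [v0 u0 cv cu] := unit_rel _ _ e1 e2.
exists (v ^+ 2); split.
- by rewrite expf_neq0.
- rewrite holJacE tr2 !mxE /DX lift_y0 lift_y1 ?sidx_x ?sidx_y ?sidx_z.
  rewrite Px Py Pz !Dx !Dy !Dz !e2E /=; ring.
- rewrite holJacE det2 !mxE /DX lift_y0 lift_y1 ?sidx_x ?sidx_y ?sidx_z.
  rewrite Px Py Pz !Dx !Dy !Dz !e2E /=.
  apply/eqP; rewrite -subr_eq0; apply/eqP.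
  transitivity (4%:R * v * (u ^+ 2 - v ^+ 3)); first ring.
  by rewrite e1 subrr mulr0.
- rewrite /rho /hdot !sum3 !J2E sidx_x sidx_y sidx_z Px Py Pz.
  apply: rho_help.
    by rewrite conj1 cu cv !mulfV //; ring.
  rewrite !conjX2 cu cv ?conj1 ?expr1n.
  transitivity (u * v ^+ 2 + 1 + v ^+ 3 / u ^+ 2); first by field; rewrite ?u0 ?v0.
  by rewrite -e1 divff ?expf_neq0 // e2; ring.
Qed.

Lemma key_z (w : {ffun 'I_2 -> C}) : Xchart iz w = 0 -> keyP iz w.
Proof.
move=> X0.
have Pz : chart_inv iz w iz = 1 := chart_inv_k _ _.
have Px : chart_inv iz w ix = w ord0 by rewrite -lift_z0 chart_inv_lift.
have Py : chart_inv iz w iy = w ord_max by rewrite -lift_z1 chart_inv_lift.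
have Dz (v : {ffun 'I_2 -> C}) : dP iz v iz = 0 := dP_k _ _.
have Dx (v : {ffun 'I_2 -> C}) : dP iz v ix = v ord0 by rewrite -lift_z0 dP_lift.
have Dy (v : {ffun 'I_2 -> C}) : dP iz v iy = v ord_max by rewrite -lift_z1 dP_lift.
move: Px Py Pz; set u := w ord0; set v := w ord_max => Px Py Pz.
have e1 : v ^+ 2 = u ^+ 3.
  have := congr1 (fun f : {ffun 'I_2 -> C} => f ord0) X0.
  rewrite /= XchartE lift_z0 !J2E sidx_x sidx_z Py Px ffunE => /eqP.
  by rewrite subr_eq0 => /eqP ->; ring.
have e2 : v * u ^+ 2 = 1.
  have := congr1 (fun f : {ffun 'I_2 -> C} => f ord_max) X0.
  rewrite /= XchartE lift_z1 !J2E sidx_y sidx_z Pz Py Px ffunE => /eqP.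
  by rewrite subr_eq0 expr1n => /eqP <-.
have [u0 v0 cu cv] := unit_rel _ _ e1 e2.
exists (u ^+ 2); split.
- by rewrite expf_neq0.
- rewrite holJacE tr2 !mxE /DX lift_z0 lift_z1 ?sidx_x ?sidx_y ?sidx_z.
  rewrite Px Py Pz !Dx !Dy !Dz !e2E /=; ring.
- rewrite holJacE det2 !mxE /DX lift_z0 lift_z1 ?sidx_x ?sidx_y ?sidx_z.
  rewrite Px Py Pz !Dx !Dy !Dz !e2E /=.
  apply/eqP; rewrite -subr_eq0; apply/eqP.
  transitivity (4%:R * u * (v ^+ 2 - u ^+ 3)); first ring.
  by rewrite e1 subrr mulr0.
- rewrite /rho /hdot !sum3 !J2E sidx_x sidx_y sidx_z Px Py Pz.
  apply: rho_help.
    by rewrite conj1 cu cv !mulfV //; ring.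
  rewrite !conjX2 cu cv ?conj1 ?expr1n.
  transitivity (u ^+ 3 / v ^+ 2 + v * u ^+ 2 + 1); first by field; rewrite ?u0 ?v0.
  by rewrite -e1 divff ?expf_neq0 // e2; ring.
Qed.

End Keys.
Section Final.
Context {R : realType}.
Local Notation C := R[i].

Lemma natC_div (a b : nat) : ((a%:R / b%:R : R)%:C) = (a%:R / b%:R : C).
Proof. by rewrite rmorphM fmorphV !rmorph_nat. Qed.

Lemma source_real (B : 'M[C]_2) :
  \tr B = 8%:R / 3%:R -> \det B = 28%:R / 9%:R -> source (realify B).
Proof.
move=> ht hd.
apply: (@source_of _ (realify B) (8%:R / 3%:R) (28%:R / 9%:R)).
- rewrite expr2; lra.
- lra.
- rewrite -realify_mul cayley2 ht hd -!natC_div.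
  by rewrite -scaleNr -rmorphN realify_lin realify1 scaleNr.
Qed.

Lemma keyP_all k (w : {ffun 'I_2 -> C}) : Xchart k w = 0 -> keyP k w.
Proof. by case: (I3_cases k) => ->; [exact: key_x|exact: key_y|exact: key_z]. Qed.

End Final.

Theorem mainTheorem17 (R : realType) :
  (forall p : {ffun 'I_3 -> R[i]}, p != 0 -> J2 p != 0) /\
  (forall (k : 'I_3) (w : {ffun 'I_2 -> R[i]}),
      Xchart k w = 0 -> hyperbolic (holJac k w)) /\
  (forall (k : 'I_3) (w : {ffun 'I_2 -> R[i]}),
      Xchart k w = 0 -> source (realJacW k w)).
Proof.
split; [|split].
- move=> p; apply: contra => /eqP J0; apply/eqP/ffunP => i.
  have h (i0 : 'I_3) : p (sidx i0) = 0.
    have := congr1 (fun f : {ffun 'I_3 -> R[i]} => f i0) J0.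
    by rewrite /= J2E ffunE => /eqP; rewrite expf_eq0 /= => /eqP.
  rewrite ffunE.
  case: (I3_cases i) => ->.
  + by rewrite -sidx_z h.
  + by rewrite -sidx_x h.
  + by rewrite -sidx_y h.
- move=> k w X0; have [l [l0 ht hd _]] := keyP_all _ _ X0.
  exact: (hyp_of _ _ l0 ht hd).
- move=> k w X0; have [l [l0 ht hd hr]] := keyP_all _ _ X0.
  rewrite realJacWE //; apply: source_real.
  + by rewrite mxtraceZ ht mulrCA hr; field.
  + rewrite detZ hd.
    transitivity (7%:R * (rho (chart_inv k w) * l) ^+ 2); first ring.
    by rewrite hr; field.
Qed.
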